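(* Let $(S_n,X_n)_{n\ge 0}$ be an alternating non-homogeneous semi-Markov process with $S_0=1$, $X_0=0$, whose semi-Markov kernels $G_Y(x,\cdot)$ and $G_Z(x,\cdot)$ are, for each $x\ge 0$, Gamma distributions with shape and rate parameters $(k_Y(x),\lambda_Y(x))$ and $(k_Z(x),\lambda_Z(x))$ respectively, i.e. with densities $$g_T(x,\tau)=\frac{\lambda_T(x)^{k_T(x)}\tau^{k_T(x)-1}e^{-\lambda_T(x)\tau}}{\Gamma(k_T(x))},\qquad \tau\ge 0,\ T\in\{Y,Z\},$$ where $k_Y,k_Z:[0,\infty)\to[1,\infty)$ and $\lambda_Y,\lambda_Z:[0,\infty)\to(0,\infty)$ are measurable. Suppose there is $c>0$ such that $\lambda_Y(x)\le c$ and $\lambda_Z(x)\le c$ for all $x\ge 0$. Then $\mathbb P(X_\infty<\infty)=0$.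
   Context: Let $(S_n,X_n)_{n\ge0}$ be random variables on a probability space with $S_n\in\{0,1\}$, $0=X_0\le X_1\le X_2\le\cdots$, $S_0=1$, and alternating states: $S_n=1$ for even $n$ and $S_n=0$ for odd $n$. Write $T_{n+1}=X_{n+1}-X_n$ (sojourn times). The process is called an alternating non-homogeneous semi-Markov process with semi-Markov kernels $G_Y,G_Z$ if for every $n\ge 0$ the conditional distribution of $T_{n+1}$ given $(S_0,X_0),\dots,(S_n,X_n)$ depends only on $(S_n,X_n)$ (and not on $n$), with $\mathbb P(T_{n+1}\le \tau\mid S_n=1,X_n=x)=G_Y(x,\tau)$ and $\mathbb P(T_{n+1}\le\tau\mid S_n=0,X_n=x)=G_Z(x,\tau)$ for all $x,\tau\ge 0$; here for each $x\ge0$, $G_Y(x,\cdot)$ and $G_Z(x,\cdot)$ are distribution functions on $[0,\infty)$, jointly measurable in $(x,\tau)$, absolutely continuous with densities $g_Y(x,\cdot)$, $g_Z(x,\cdot)$. Periods spent in state $1$ are called $Y$-phases, periods in state $0$ are $Z$-phases. The explosion time is $X_\infty=\lim_{n\to\infty}X_n$. *)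

(* Defs.v *)
From HB Require Import structures.
From mathcomp Require Import all_boot all_order all_algebra.
From mathcomp Require Import all_classical all_reals all_analysis.
Set Implicit Arguments. Unset Strict Implicit. Unset Printing Implicit Defensive.
Import Order.TTheory GRing.Theory Num.Theory.
Import numFieldNormedType.Exports.
Local Open Scope classical_set_scope.
Local Open Scope ring_scope.

Definition Gammaf (R : realType) (k : R) : R :=
  fine (\int[@lebesgue_measure R]_(t in `[0%R, +oo[) ((t `^ (k - 1)) * expR (- t))%:E)%E.

Definition gamma_pdf (R : realType) (k l : R) (t : R) : R :=
  (l `^ k) * (t `^ (k - 1)) * expR (- (l * t)) / Gammaf k.

Definition gamma_cdf (R : realType) (k l : R) (tau : R) : \bar R :=
  (\int[@lebesgue_measure R]_(t in `[0%R, tau]) (gamma_pdf k l t)%:E)%E.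

(* The history sigma-algebra generated by X_0, ..., X_n (the states S_k are
   deterministic, S_k = 1 iff k is even, so they add no information). *)
Definition history (d : measure_display) (T : measurableType d) (R : realType)
  (X : nat -> T -> R) (n : nat) : set (set T) :=
  <<s [set: T], [set A | exists k, (k <= n)%N /\
        exists B : set R, measurable B /\ A = X k @^-1` B] >>.

(* Alternating non-homogeneous semi-Markov process, S_0 = 1 (even n: Y-phase,
   odd n: Z-phase), with kernels G_Y(x,.) = Gamma(kY x, lY x) and
   G_Z(x,.) = Gamma(kZ x, lZ x): for every n, every history event H of
   (S_0,X_0),...,(S_n,X_n) and every tau >= 0,
   P(H ∩ {T_(n+1) <= tau}) = E[1_H G_(S_n)(X_n, tau)]. *)
Definition gamma_alt_semiMarkov (d : measure_display) (T : measurableType d)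
  (R : realType) (P : probability T R) (X : nat -> T -> R)
  (kY lY kZ lZ : R -> R) : Prop :=
  (forall n, measurable_fun [set: T] (X n)) /\
  (forall w, X 0%N w = 0) /\
  (forall n w, X n w <= X n.+1 w) /\
  (forall n (H : set T) (tau : R), history X n H -> 0 <= tau ->
     P (H `&` [set w | X n.+1 w - X n w <= tau]) =
     (\int[P]_(w in H)
        (if odd n then gamma_cdf (kZ (X n w)) (lZ (X n w)) tau
         else gamma_cdf (kY (X n w)) (lY (X n w)) tau))%E).

Definition explosion_time (T : Type) (R : realType) (X : nat -> T -> R) (w : T)
  : \bar R := limn (fun n => (X n w)%:E).

(* Main.v *)
Require Import Defs.
From HB Require Import structures.
From mathcomp Require Import all_boot all_order all_algebra.
From mathcomp Require Import all_classical all_reals all_analysis.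
From mathcomp.algebra_tactics Require Import ring lra.
Import Order.TTheory GRing.Theory Num.Theory.
Import numFieldNormedType.Exports.
Set Implicit Arguments. Unset Strict Implicit.
Local Open Scope classical_set_scope.
Local Open Scope ring_scope.
Lemma int_le d (T : measurableType d) (R : realType) (mu : {measure set T -> \bar R})
  (D1 D2 : set T) (f g : T -> \bar R) :
  (forall x, D1 x -> (0 <= f x)%E) -> (forall x, D2 x -> (0 <= g x)%E) ->
  (forall x, D1 x -> D2 x /\ (f x <= g x)%E) ->
  (\int[mu]_(x in D1) f x <= \int[mu]_(x in D2) g x)%E.
Proof.
move=> f0 g0 fg; rewrite !ge0_integralE //.
apply: ereal_sup_le => _ [h hle <-]; exists h => //= x.
apply: (le_trans (hle x)); rewrite /patch.
case: ifPn => [/set_mem xD1|_].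
  by have [xD2 le] := fg x xD1; rewrite ifT //; exact/mem_set.
by case: ifPn => // /set_mem /g0.
Qed.
Lemma real_aux (R : realType) (N A a E F G : R) :
  0 <= N -> N <= A * a -> 0 < A * E -> A * E <= G -> E * F = 1 -> 0 <= a -> 0 <= F ->
  N / G <= a * F.
Proof.
move=> N0 NA AE0 AEG EF a0 F0.
have G0 : 0 < G by apply: lt_le_trans AEG.
rewrite ler_pdivrMr //.
apply: (le_trans NA).
have -> : A * a = a * F * (A * E) by rewrite -[LHS]mulr1 -EF; ring.
by rewrite ler_wpM2l // mulr_ge0.
Qed.
Lemma cdf_bound (R : realType) (k l tau a : R) :
  1 <= k -> 0 < l -> 0 < tau -> 0 < a -> l * tau <= a ->
  (0 <= gamma_cdf k l tau)%E /\ (gamma_cdf k l tau <= (a * expR (a + 1))%:E)%E.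
Proof.
move=> k1 l0 t0 a0 lta.
set I := (\int[@lebesgue_measure R]_(t in `[0%R, +oo[) ((t `^ (k - 1)) * expR (- t))%:E)%E.
have I0 : (0 <= I)%E.
  by apply: integral_ge0 => t _; rewrite lee_fin mulr_ge0 // ?powR_ge0 ?expR_ge0.
have Gk : Gammaf k = fine I by [].
have G0 : 0 <= Gammaf k by rewrite /Gammaf fine_ge0.
have pdf0 t : 0 <= gamma_pdf k l t.
  by rewrite /gamma_pdf divr_ge0 // !mulr_ge0 // ?powR_ge0 ?expR_ge0.
have cdf0 : (0 <= gamma_cdf k l tau)%E.
  by apply: integral_ge0 => t _; rewrite lee_fin.
have ae0 : 0 <= a * expR (a + 1) by rewrite mulr_ge0 // ?expR_ge0 ?ltW.
split => //.
have k10 : 0 <= k - 1 by rewrite subr_ge0.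
have [[r Ir]|Iinf] : (exists r, I = r%:E) \/ I = +oo%E.
  have H (x : \bar R) : (0 <= x)%E -> (exists r, x = r%:E) \/ x = +oo%E.
    by case: x => [r||] // _; [left; exists r|right].
  exact: H.
- pose A := a `^ (k - 1).
  have A0 : 0 < A by rewrite powR_gt0.
  have low : A * expR (- (a + 1)) <= r.
    rewrite -lee_fin -Ir.
    have -> : ((A * expR (- (a + 1)))%:E = \int[@lebesgue_measure R]_(t in `[a, (a + 1)%R]) (cst (A * expR (- (a + 1)))%:E) t)%E.
      rewrite integral_cst //= lebesgue_measure_itv /= lte_fin ltrDl ltr01.
      by rewrite -EFinD addrAC subrr add0r mule1.
    apply: int_le => [t _|t _|t /=].
    - by rewrite lee_fin mulr_ge0 // ?expR_ge0 ?ltW.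
    - by rewrite lee_fin mulr_ge0 // ?powR_ge0 ?expR_ge0.
    move=> Ht; move: Ht; rewrite in_itv /= => /andP[aT Ta1]; split.
      rewrite in_itv /= andbT; exact: (le_trans (ltW a0)).
    rewrite lee_fin ler_pM // ?powR_ge0 ?expR_ge0 //.
      apply: ge0_ler_powR => //; rewrite nnegrE ?ltW //; exact: (lt_le_trans a0).
    by rewrite ler_expR lerN2.
  have Gr : Gammaf k = r by rewrite Gk Ir.
  have AEpos : 0 < A * expR (- (a + 1)) by rewrite mulr_gt0 // expR_gt0.
  pose N := l `^ k * tau `^ (k - 1) * tau.
  have NA : N <= A * a.
    rewrite /N; have -> : l `^ k = l `^ (k - 1) * l.
      rewrite -[in LHS](subrK 1 k) [LHS]powRD; last by rewrite (gt_eqF l0) implybT.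
      by rewrite powRr1 ?ltW.
    have -> : l `^ (k - 1) * l * tau `^ (k - 1) * tau = (l `^ (k - 1) * tau `^ (k - 1)) * (l * tau) by ring.
    rewrite -powRM; [|exact: ltW l0|exact: ltW t0].
    rewrite /A; apply: ler_pM; [exact: powR_ge0 | exact: mulr_ge0 (ltW l0) (ltW t0) | | exact: lta].
    apply: ge0_ler_powR => //; rewrite nnegrE.
    - exact: mulr_ge0 (ltW l0) (ltW t0).
    - exact: ltW.
  have N0 : 0 <= N by rewrite /N !mulr_ge0 ?powR_ge0 ?ltW.
  rewrite /gamma_cdf.
  apply: (@le_trans _ _ (\int[@lebesgue_measure R]_(t in `[0%R, tau]) (cst (l `^ k * tau `^ (k - 1) / r)%:E) t)%E).
    apply: int_le => [t _|t _|t /=].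
    - by rewrite lee_fin.
    - by rewrite lee_fin divr_ge0 ?mulr_ge0 ?powR_ge0 // -Gr.
    move=> Ht; split => //; move: Ht; rewrite in_itv /= => /andP[t0' tT].
    rewrite lee_fin /gamma_pdf Gr ler_wpM2r // ?invr_ge0 -?Gr //.
    rewrite -[X in _ <= X]mulr1 ler_pM // ?mulr_ge0 ?powR_ge0 ?expR_ge0 //.
      apply: ler_wpM2l; first by rewrite powR_ge0.
      apply: ge0_ler_powR => //; rewrite nnegrE //; exact: ltW t0.
    rewrite expR_le1 oppr_le0; exact: mulr_ge0 (ltW l0) t0'.
  rewrite integral_cst //= lebesgue_measure_itv /= lte_fin t0 oppr0 adde0 -EFinM lee_fin.
  rewrite mulrAC -/N.
  apply: (@real_aux R N A a (expR (-(a+1))) (expR (a+1)) r N0 NA AEpos).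
  - exact: low.
  - by rewrite -expRD addNr expR0.
  - exact: ltW.
  - exact: expR_ge0.
- have G00 : Gammaf k = 0 by rewrite Gk Iinf.
  rewrite /gamma_cdf.
  under eq_integral => t _ do rewrite /gamma_pdf G00 invr0 mulr0.
  by rewrite integral0 lee_fin.
Qed.
Lemma hist_pre d (T : measurableType d) (R : realType) (X : nat -> T -> R) n k (B : set R) :
  (k <= n)%N -> measurable B -> history X n (X k @^-1` B).
Proof.
move=> kn mB; apply: sub_sigma_algebra; exists k; split => //; by exists B.
Qed.

Lemma hist_B d (T : measurableType d) (R : realType) (X : nat -> T -> R) n j (tau : R) :
  (j < n)%N -> history X n [set w | X j.+1 w - X j w <= tau].
Proof.
move=> jn.
set G := [set A | exists k, (k <= n)%N /\ exists B : set R, measurable B /\ A = X k @^-1` B].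
pose S := g_sigma_algebraType G.
have -> : [set w | X j.+1 w - X j w <= tau] =
   ~` \bigcup_(q : rat) ([set w | X j w < ratr q] `&` [set w | ratr q + tau < X j.+1 w]).
  apply/seteqP; split => w /=.
    move=> le [q _ /= [h1 h2]].
    have : X j.+1 w - X j w > tau.
      lra.
    by rewrite ltNge le.
  move=> H; rewrite leNgt; apply/negP => lt; apply: H.
  have : X j w < X j.+1 w - tau by lra.
  move=> /rat_in_itvoo [q]; rewrite in_itv /= => /andP[h1 h2].
  exists q => //; split => //=; lra.
have mS (A : set T) : G A -> @measurable _ S A by move=> GA; apply: sub_sigma_algebra.
change (@measurable _ S (~` \bigcup_(q : rat) ([set w | X j w < ratr q] `&` [set w | ratr q + tau < X j.+1 w]))).
apply: measurableC; apply: bigcupT_measurable_rat => q; apply: measurableI; apply: mS.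
- exists j; split; first exact: ltnW.
  exists [set` `]-oo, ratr q[]; split => //.
- exists j.+1; split => //.
  exists [set` `]ratr q + tau, +oo[]; split => //.
  by apply/seteqP; split => w; rewrite /= in_itv /= andbT.
Qed.
Lemma hist_meas d (T : measurableType d) (R : realType) (X : nat -> T -> R) n (A : set T) :
  (forall k, measurable_fun [set: T] (X k)) -> history X n A -> measurable A.
Proof.
move=> mX; apply: smallest_sub; first exact: sigma_algebra_measurable.
move=> _ [k [_ [B [mB ->]]]]; rewrite -[X k @^-1` B]setTI; exact: mX.
Qed.

Lemma seq_mono (T : Type) (R : realType) (X : nat -> T -> R) w m n :
  (forall n w, X n w <= X n.+1 w) -> (m <= n)%N -> X m w <= X n w.
Proof.
move=> Xinc mn; rewrite -(subnKC mn); elim: (n - m)%N => [|i IH]; first by rewrite addn0.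
by rewrite addnS; apply: le_trans IH _.
Qed.

Lemma expl_sup (T : Type) (R : realType) (X : nat -> T -> R) w :
  (forall n w, X n w <= X n.+1 w) ->
  explosion_time X w = ereal_sup (range (fun n => (X n w)%:E)).
Proof.
move=> Xinc; apply: cvg_lim => //; apply: ereal_nondecreasing_cvgn => m n mn.
by rewrite lee_fin; apply: seq_mono.
Qed.

Lemma expl_fin (T : Type) (R : realType) (X : nat -> T -> R) w :
  (forall n w, X n w <= X n.+1 w) -> (forall w, X 0%N w = 0) ->
  (explosion_time X w < +oo)%E <-> exists M : nat, forall n, X n w <= M%:R.
Proof.
move=> Xinc X0; rewrite expl_sup //; split.
  have : (0 <= ereal_sup (range (fun n => (X n w)%:E)))%E.
    by apply: ereal_sup_ubound; exists 0%N => //; rewrite X0.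
  case: (ereal_sup _) (@ereal_sup_ubound _ (range (fun n => (X n w)%:E))) => [s||] ub // s0 _.
  exists (Num.Def.archi_bound s) => n.
  apply: (le_trans (y := s)); first by rewrite -lee_fin; apply: ub; exists n.
  by apply/ltW/archi_boundP; rewrite -lee_fin.
move=> [M HM]; apply: (le_lt_trans (y := (M%:R)%:E)); last exact: ltry.
by apply: ge_ereal_sup => _ [n _ <-]; rewrite lee_fin.
Qed.

Lemma expl_tail (T : Type) (R : realType) (X : nat -> T -> R) w (tau : R) :
  (forall n w, X n w <= X n.+1 w) -> (forall w, X 0%N w = 0) -> 0 < tau ->
  (explosion_time X w < +oo)%E ->
  exists N, forall i, X (N + i).+1 w - X (N + i) w <= tau.
Proof.
move=> Xinc X0 t0; rewrite expl_sup //.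
have : (0 <= ereal_sup (range (fun n => (X n w)%:E)))%E.
  by apply: ereal_sup_ubound; exists 0%N => //; rewrite X0.
case E: (ereal_sup _) => [s||] // s0 _.
have : ((s - tau)%:E < ereal_sup (range (fun n => (X n w)%:E)))%E.
  by rewrite E lte_fin ltrBlDr ltrDl.
move=> /ereal_sup_gt [_ [N _ <-]]; rewrite lte_fin => HN.
exists N => i.
have ub : X (N + i).+1 w <= s.
  rewrite -lee_fin -E; apply: ereal_sup_ubound; by exists (N + i).+1.
have := @seq_mono _ _ X w _ _ Xinc (leq_addr i N).
lra.
Qed.
Lemma hist_I d (T : measurableType d) (R : realType) (X : nat -> T -> R) n (A B : set T) :
  history X n A -> history X n B -> history X n (A `&` B).
Proof.
set G := [set A | exists k, (k <= n)%N /\ exists B : set R, measurable B /\ A = X k @^-1` B].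
pose S := g_sigma_algebraType G.
move=> hA hB; change (@measurable _ S (A `&` B)); exact: measurableI.
Qed.

Unset Implicit Arguments. Set Strict Implicit.
Theorem proposition1 (d : measure_display) (T : measurableType d) (R : realType)
  (P : probability T R) (X : nat -> T -> R) (kY lY kZ lZ : R -> R) (c : R) :
  measurable_fun [set x : R | 0 <= x] kY ->
  measurable_fun [set x : R | 0 <= x] lY ->
  measurable_fun [set x : R | 0 <= x] kZ ->
  measurable_fun [set x : R | 0 <= x] lZ ->
  (forall x, 0 <= x -> 1 <= kY x) -> (forall x, 0 <= x -> 1 <= kZ x) ->
  (forall x, 0 <= x -> 0 < lY x) -> (forall x, 0 <= x -> 0 < lZ x) ->
  0 < c ->
  (forall x, 0 <= x -> lY x <= c) -> (forall x, 0 <= x -> lZ x <= c) ->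
  gamma_alt_semiMarkov P X kY lY kZ lZ ->
  P [set w | (explosion_time X w < +oo)%E] = 0%E.
Proof.
move=> _ _ _ _ kY1 kZ1 lY0 lZ0 c0 lYc lZc [mX [X0 [Xinc Hk]]].
pose a : R := expR (-2) / 2.
have e0 : 0 < expR (-2 : R) := expR_gt0 _.
have e1 : expR (-2 : R) < 1 by rewrite expR_lt1 oppr_lt0.
have a0 : 0 < a by rewrite /a divr_gt0.
have a1 : a <= 1 by rewrite /a; lra.
pose tau := a / c.
have t0 : 0 < tau by rewrite /tau divr_gt0.
pose q := a * expR (a + 1).
have q0 : 0 <= q by rewrite /q mulr_ge0 ?expR_ge0 ?ltW.
have q1 : q < 1.
  have : expR (a + 1) <= expR 2 by rewrite ler_expR; lra.
  have : expR (-2) * expR 2 = 1 :> R by rewrite -expRD addNr expR0.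
  rewrite /q /a; nra.
have Xge0 n w : 0 <= X n w by rewrite -(X0 w); apply: seq_mono.
have lta l : 0 < l -> l <= c -> l * tau <= a.
  move=> l0 lc; rewrite /tau mulrA ler_pdivrMr // mulrC ler_wpM2l //; exact: ltW.
have SB n H : history X n H ->
    (P (H `&` [set w | (X n.+1 w - X n w <= tau)%R]) <= q%:E * P H)%E.
  move=> hH; rewrite Hk //; last exact: ltW.
  rewrite -integral_cst; last exact: hist_meas hH.
  apply: int_le => [w _|w _|w Hw].
  - case: ifP => _; [exact: (cdf_bound (kZ1 _ (Xge0 n w)) (lZ0 _ (Xge0 n w)) t0 a0 (lta _ (lZ0 _ (Xge0 n w)) (lZc _ (Xge0 n w)))).1
                    |exact: (cdf_bound (kY1 _ (Xge0 n w)) (lY0 _ (Xge0 n w)) t0 a0 (lta _ (lY0 _ (Xge0 n w)) (lYc _ (Xge0 n w)))).1].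
  - by rewrite lee_fin.
  split => //.
  case: ifP => _; [exact: (cdf_bound (kZ1 _ (Xge0 n w)) (lZ0 _ (Xge0 n w)) t0 a0 (lta _ (lZ0 _ (Xge0 n w)) (lZc _ (Xge0 n w)))).2
                    |exact: (cdf_bound (kY1 _ (Xge0 n w)) (lY0 _ (Xge0 n w)) t0 a0 (lta _ (lY0 _ (Xge0 n w)) (lYc _ (Xge0 n w)))).2].
clearbody q.
pose Af N m := [set w | forall i, (i < m)%N -> X (N + i).+1 w - X (N + i) w <= tau].
have Af0 N : Af N 0%N = setT by apply/seteqP; split => // w _ i.
have AfS N m : Af N m.+1 = Af N m `&` [set w | X (N + m).+1 w - X (N + m) w <= tau].
  apply/seteqP; split => w /=.
    move=> H; split; first by move=> i im; apply: H; exact: ltnW.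
    exact: H.
  move=> [H1 H2] i; rewrite ltnS leq_eqVlt => /orP[/eqP -> //|]; exact: H1.
have hAf N m n : (N + m <= n)%N -> history X n (Af N m).
  elim: m n => [|m IH] n Hn.
    rewrite Af0; apply: sub_sigma_algebra; exists 0%N; split => //.
    by exists setT; split => //; rewrite preimage_setT.
  rewrite AfS; apply: hist_I.
    by apply: IH; apply: leq_trans Hn; rewrite leq_add2l.
  by apply: hist_B; rewrite -addnS.
have PAf N m : (P (Af N m) <= (q ^+ m)%:E)%E.
  elim: m => [|m IH]; first by rewrite Af0 probability_setT expr0.
  rewrite AfS; apply: le_trans (SB _ _ (hAf N m (N + m)%N (leqnn _))) _.
  by rewrite exprS EFinM lee_wpmul2l // lee_fin.
pose E N := [set w | forall i, X (N + i).+1 w - X (N + i) w <= tau].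
have mE N : measurable (E N).
  have -> : E N = \bigcap_i [set w | X (N + i).+1 w - X (N + i) w <= tau].
    by apply/seteqP; split => w /= H i; [move=> _|]; exact: H.
  apply: bigcapT_measurable => i; apply: (hist_meas (n := (N + i).+1) mX).
  exact: hist_B.
have PE N : P (E N) = 0%E.
  have EA m : (P (E N) <= (q ^+ m)%:E)%E.
    apply: le_trans (PAf N m).
    apply: le_measure; rewrite ?inE //; first exact: hist_meas (hAf N m _ (leqnn _)).
    by move=> w Ew i _; exact: Ew.
  have Pfin : P (E N) \is a fin_num.
    rewrite ge0_fin_numE // (le_lt_trans (probability_le1 P (mE N))) //; exact: ltry.
  set p := fine (P (E N)).
  have PEp : P (E N) = p%:E by rewrite fineK.
  have pm m : p <= q ^+ m by rewrite -lee_fin -PEp.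
  have cq : (fun m => q ^+ m) @ \oo --> (0 : R).
    by apply: cvg_expr; rewrite ger0_norm.
  have : p <= lim ((fun m => q ^+ m) @ \oo).
    by apply: limr_ge; [exact: cvgP cq | exact: nearW].
  rewrite (cvg_lim _ cq) // => p0.
  apply/eqP; rewrite eq_le measure_ge0 andbT PEp lee_fin p0 //.
set L := [set w | (explosion_time X w < +oo)%E].
have mL : measurable L.
  have -> : L = \bigcup_(M : nat) \bigcap_n (X n @^-1` [set` `]-oo, (M%:R : R)]]).
    apply/seteqP; split => w /=.
      move=> /(expl_fin w Xinc X0) [M HM]; exists M => // n _ /=.
      by rewrite in_itv /= HM.
    move=> [M _ HM]; apply/(expl_fin w Xinc X0); exists M => n.
    by have := HM n I; rewrite /= in_itv.
  apply: bigcupT_measurable => M; apply: bigcapT_measurable => n.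
  rewrite -[X in measurable X]setTI; exact: mX.
have sub : L `<=` \bigcup_N E N.
  move=> w Lw; have [N HN] := expl_tail Xinc X0 t0 Lw; by exists N.
have := @measure_sigma_subadditive _ _ _ P L E mE mL sub.
rewrite eseries0 // => [H|i _ _]; last exact: PE.
by apply/eqP; rewrite eq_le H measure_ge0.
Qed.
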